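(* Let $a,b\in\mathbb{R}$ satisfy $\frac13<a-b<\frac4{\pi^2}$ and $\frac12<a\le\frac2\pi-b$. Suppose moreover that $16ab(b-a)+(a+b)^2>0$ and that \[ x_2=\frac{(a+b)(2b-2a+1)+\sqrt{16ab(b-a)+(a+b)^2}}{2(a-b)^2}\in(0,1). \] Then for all $x\in(0,1)$, \[ \arccos x\ge \frac{(1+x_2)^{b+1/2}(1-x_2)^{1/2-a}}{a+b+(a-b)x_2}\cdot\frac{(1-x)^a}{(1+x)^b}. \]
   Context: $\arccos$ denotes the principal inverse cosine with values in $[0,\pi]$. *)

(* Defs.v *)
From Stdlib Require Export Reals.
Open Scope R_scope.

Definition x2 (a b : R) : R :=
  ((a + b) * (2 * b - 2 * a + 1) + sqrt (16 * a * b * (b - a) + (a + b) ^ 2))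
  / (2 * (a - b) ^ 2).

(* Main.v *)
Require Import Defs.
From Stdlib Require Import Reals Lra Psatz FunctionalExtensionality Ranalysis5.
Open Scope R_scope.

Notation dpl := derivable_pt_lim.

Lemma D_ext f g x l : (forall t, f t = g t) -> dpl f x l -> dpl g x l.
Proof. intros H; replace g with f; auto. apply functional_extensionality; auto. Qed.
Lemma D_leq f x l l' : dpl f x l -> l = l' -> dpl f x l'.
Proof. intros; subst; auto. Qed.
Lemma D_plus f g x l1 l2 : dpl f x l1 -> dpl g x l2 -> dpl (fun t => f t + g t) x (l1 + l2).
Proof. apply derivable_pt_lim_plus. Qed.
Lemma D_minus f g x l1 l2 : dpl f x l1 -> dpl g x l2 -> dpl (fun t => f t - g t) x (l1 - l2).
Proof. apply derivable_pt_lim_minus. Qed.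
Lemma D_mult f g x l1 l2 : dpl f x l1 -> dpl g x l2 -> dpl (fun t => f t * g t) x (l1 * g x + f x * l2).
Proof. apply derivable_pt_lim_mult. Qed.
Lemma D_div f g x l1 l2 : dpl f x l1 -> dpl g x l2 -> g x <> 0 ->
  dpl (fun t => f t / g t) x ((l1 * g x - l2 * f x) / (g x)²).
Proof. apply derivable_pt_lim_div. Qed.
Lemma D_comp f g x l1 l2 : dpl g x l1 -> dpl f (g x) l2 -> dpl (fun t => f (g t)) x (l2 * l1).
Proof. intros; apply (derivable_pt_lim_comp g f); auto. Qed.
Lemma D_const c x : dpl (fun _ => c) x 0.
Proof. apply derivable_pt_lim_const. Qed.
Lemma D_id x : dpl (fun t => t) x 1.
Proof. apply derivable_pt_lim_id. Qed.

Definition rr t := sqrt (1 - t*t).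
Lemma rr_pos t : -1 < t < 1 -> 0 < rr t.
Proof. intros; unfold rr; apply sqrt_lt_R0; nra. Qed.
Lemma rr_sq t : -1 < t < 1 -> rr t * rr t = 1 - t*t.
Proof. intros; unfold rr; apply sqrt_sqrt; nra. Qed.

Lemma d_rr t : -1 < t < 1 -> dpl rr t (- t / rr t).
Proof.
  intros Ht. pose proof (rr_pos t Ht).
  eapply D_leq.
  - apply (D_comp sqrt (fun t => 1 - t*t)).
    + apply D_minus. apply D_const. apply D_mult; apply D_id.
    + apply derivable_pt_lim_sqrt. nra.
  - fold (rr t). unfold rr in *. change RinvImpl.Rinv with Rinv. field. lra.
Qed.

Lemma d_acos t : -1 < t < 1 -> dpl acos t (- 1 / rr t).
Proof.
  intros Ht. apply derive_pt_eq_1 with (derivable_pt_acos t Ht).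
  rewrite derive_pt_acos. reflexivity.
Qed.

Definition w a b t := a + b + (a - b) * t.
Definition gf a b t := acos t - rr t / w a b t.
Definition Ef a b t := exp (b * ln (1 + t) - a * ln (1 - t)).
Definition Ff a b t := acos t * Ef a b t.
Definition Hf a b t := (b + 1/2) * ln (1 + t) + (1/2 - a) * ln (1 - t) - ln (w a b t).
Definition qf a b t := (a - b)^2 * t^2 + (a + b) * (2 * (a - b) - 1) * t + (a + b)^2 - (a - b).
Definition gd a b t := - qf a b t / (rr t * (w a b t)^2).
Definition Hder a b t := qf a b t / ((1 - t*t) * w a b t).
Definition Fd a b t := Ef a b t * (acos t * (w a b t / (1 - t*t)) - / rr t).

Lemma w_pos a b t : 0 < b -> 0 < a - b -> 0 <= t -> 0 < w a b t.
Proof. intros; unfold w; nra. Qed.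

Lemma d_w a b t : dpl (w a b) t (a - b).
Proof.
  unfold w. eapply D_leq. apply D_plus. apply D_const. apply D_mult. apply D_const. apply D_id.
  cbv beta. ring.
Qed.

Lemma d_g a b t : 0 < b -> 0 < a - b -> 0 <= t < 1 -> dpl (gf a b) t (gd a b t).
Proof.
  intros Hb Hd Ht.
  assert (Ht' : -1 < t < 1) by lra.
  pose proof (rr_pos t Ht'). pose proof (rr_sq t Ht').
  pose proof (w_pos a b t Hb Hd (proj1 Ht)).
  eapply D_leq.
  - apply D_minus. apply d_acos; auto. apply D_div. apply d_rr; auto. apply d_w. lra.
  - unfold gd, qf, Rsqr. 
    replace (- ((a - b) ^ 2 * t ^ 2 + (a + b) * (2 * (a - b) - 1) * t + (a + b) ^ 2 - (a - b)))
      with (- (w a b t * w a b t - t * w a b t - rr t * rr t * (a - b))) by (rewrite H0; unfold w; ring).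
    cbv beta. field. lra.
Qed.

Lemma d_H a b t : 0 < b -> 0 < a - b -> 0 <= t < 1 -> dpl (Hf a b) t (Hder a b t).
Proof.
  intros Hb Hd Ht.
  pose proof (w_pos a b t Hb Hd (proj1 Ht)).
  eapply D_leq.
  - unfold Hf. apply D_minus. apply D_plus.
    + apply D_mult. apply D_const. apply (D_comp ln (fun t => 1 + t)).
      apply D_plus. apply D_const. apply D_id. apply derivable_pt_lim_ln. lra.
    + apply D_mult. apply D_const. apply (D_comp ln (fun t => 1 - t)).
      apply D_minus. apply D_const. apply D_id. apply derivable_pt_lim_ln. lra.
    + apply (D_comp ln (w a b)). apply d_w. apply derivable_pt_lim_ln. lra.
  - cbv beta. unfold Hder, qf. change RinvImpl.Rinv with Rinv. unfold w in *. field. repeat split; nra.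
Qed.

Lemma d_E a b t : -1 < t < 1 -> dpl (Ef a b) t (Ef a b t * (b / (1 + t) + a / (1 - t))).
Proof.
  intros Ht. unfold Ef.
  eapply D_leq.
  - apply (D_comp exp (fun t => b * ln (1 + t) - a * ln (1 - t))).
    apply D_minus.
    + apply D_mult. apply D_const. apply (D_comp ln (fun t => 1 + t)).
      apply D_plus. apply D_const. apply D_id. apply derivable_pt_lim_ln. lra.
    + apply D_mult. apply D_const. apply (D_comp ln (fun t => 1 - t)).
      apply D_minus. apply D_const. apply D_id. apply derivable_pt_lim_ln. lra.
    + apply derivable_pt_lim_exp.
  - cbv beta. change RinvImpl.Rinv with Rinv. field. lra.
Qed.

Lemma d_F a b t : 0 < b -> 0 < a - b -> 0 <= t < 1 -> dpl (Ff a b) t (Fd a b t).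
Proof.
  intros Hb Hd Ht.
  assert (Ht' : -1 < t < 1) by lra.
  pose proof (rr_pos t Ht').
  eapply D_leq.
  - unfold Ff. apply D_mult. apply d_acos; auto. apply d_E; auto.
  - cbv beta. unfold Fd, w. field. repeat split; nra.
Qed.

Lemma incr f f' u v : u <= v -> (forall c, u <= c <= v -> dpl f c (f' c)) ->
  (forall c, u <= c <= v -> 0 <= f' c) -> f u <= f v.
Proof.
  intros Huv Hd Hp. destruct (Req_dec u v) as [->|Hne]; [lra|].
  destruct (MVT_cor2 f f' u v ltac:(lra) Hd) as [c [Hc1 Hc2]].
  pose proof (Hp c ltac:(lra)). nra.
Qed.

Lemma decr f f' u v : u <= v -> (forall c, u <= c <= v -> dpl f c (f' c)) ->
  (forall c, u <= c <= v -> f' c <= 0) -> f v <= f u.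
Proof.
  intros Huv Hd Hp. destruct (Req_dec u v) as [->|Hne]; [lra|].
  destruct (MVT_cor2 f f' u v ltac:(lra) Hd) as [c [Hc1 Hc2]].
  pose proof (Hp c ltac:(lra)). nra.
Qed.

Definition DD a b := 16 * a * b * (b - a) + (a + b) ^ 2.
Definition x1 a b := ((a + b) * (2 * b - 2 * a + 1) - sqrt (DD a b)) / (2 * (a - b) ^ 2).

Lemma q_fact a b t : 0 < a - b -> 0 <= DD a b ->
  qf a b t = (a - b)^2 * (t - x1 a b) * (t - x2 a b).
Proof.
  intros Hd HD. unfold x1, x2. fold (DD a b).
  pose proof (sqrt_sqrt _ HD) as HS. set (S := sqrt (DD a b)) in *.
  unfold qf. field_simplify_eq; [| nra].
  replace (S ^ 2) with (DD a b) by (rewrite <- HS; ring).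
  unfold DD. ring.
Qed.

Lemma x1_lt_x2 a b : 0 < a - b -> 0 < DD a b -> x1 a b < x2 a b.
Proof.
  intros Hd HD. unfold x1, x2. fold (DD a b).
  pose proof (sqrt_lt_R0 _ HD).
  apply Rmult_lt_compat_r. apply Rinv_0_lt_compat. nra. lra.
Qed.

Lemma q_lo a b t : 0 < a - b -> 0 < DD a b -> t <= x1 a b -> 0 <= qf a b t.
Proof.
  intros Hd HD Ht. rewrite q_fact by lra. pose proof (x1_lt_x2 a b Hd HD).
  assert (0 < (a-b)^2) by nra.
  assert (0 <= (t - x1 a b) * (t - x2 a b)) by nra.
  rewrite Rmult_assoc. apply Rmult_le_pos; lra.
Qed.
Lemma q_hi a b t : 0 < a - b -> 0 < DD a b -> x2 a b <= t -> 0 <= qf a b t.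
Proof.
  intros Hd HD Ht. rewrite q_fact by lra. pose proof (x1_lt_x2 a b Hd HD).
  assert (0 < (a-b)^2) by nra.
  assert (0 <= (t - x1 a b) * (t - x2 a b)) by nra.
  rewrite Rmult_assoc. apply Rmult_le_pos; lra.
Qed.
Lemma q_mid a b t : 0 < a - b -> 0 < DD a b -> x1 a b <= t <= x2 a b -> qf a b t <= 0.
Proof.
  intros Hd HD Ht. rewrite q_fact by lra.
  assert (0 < (a-b)^2) by nra.
  assert ((t - x1 a b) * (t - x2 a b) <= 0) by nra.
  rewrite Rmult_assoc. assert (0 <= (a-b)^2 * - ((t - x1 a b) * (t - x2 a b))) by (apply Rmult_le_pos; lra). lra.
Qed.

Lemma gd_sign a b c : 0 < b -> 0 < a - b -> 0 <= c < 1 ->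
  (0 <= qf a b c -> gd a b c <= 0) /\ (qf a b c <= 0 -> 0 <= gd a b c).
Proof.
  intros Hb Hd Hc. assert (Hc' : -1 < c < 1) by lra.
  pose proof (rr_pos c Hc'). pose proof (w_pos a b c Hb Hd ltac:(lra)).
  assert (0 < rr c * w a b c ^ 2) by (apply Rmult_lt_0_compat; nra).
  unfold gd, Rdiv. split; intros.
  - assert (0 <= qf a b c * / (rr c * w a b c ^ 2)) by (apply Rmult_le_pos; [lra | left; apply Rinv_0_lt_compat; lra]). lra.
  - assert (0 <= - qf a b c * / (rr c * w a b c ^ 2)) by (apply Rmult_le_pos; [lra | left; apply Rinv_0_lt_compat; lra]). lra.
Qed.

Lemma Hd_sign a b c : 0 < b -> 0 < a - b -> 0 <= c < 1 ->
  (0 <= qf a b c -> 0 <= Hder a b c) /\ (qf a b c <= 0 -> Hder a b c <= 0).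
Proof.
  intros Hb Hd Hc.
  pose proof (w_pos a b c Hb Hd ltac:(lra)).
  assert (0 < (1 - c*c) * w a b c) by (apply Rmult_lt_0_compat; nra).
  unfold Hder, Rdiv. split; intros.
  - apply Rmult_le_pos; [lra | left; apply Rinv_0_lt_compat; lra].
  - assert (0 <= - qf a b c * / ((1 - c*c) * w a b c)) by (apply Rmult_le_pos; [lra | left; apply Rinv_0_lt_compat; lra]). lra.
Qed.

Lemma g_dec_lo a b u v : 0 < b -> 0 < a - b -> 0 < DD a b -> 0 <= u -> u <= v -> v <= x1 a b -> v < 1 ->
  gf a b v <= gf a b u.
Proof.
  intros Hb Hd HD Hu Huv Hv1 Hv.
  apply decr with (gd a b); auto.
  - intros c Hc; apply d_g; auto; lra.
  - intros c Hc. apply gd_sign; auto. lra. apply q_lo; auto. lra.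
Qed.

Lemma g_inc_mid a b u v : 0 < b -> 0 < a - b -> 0 < DD a b -> 0 <= u -> x1 a b <= u -> u <= v -> v <= x2 a b -> v < 1 ->
  gf a b u <= gf a b v.
Proof.
  intros Hb Hd HD Hu Hu1 Huv Hv1 Hv.
  apply incr with (gd a b); auto.
  - intros c Hc; apply d_g; auto; lra.
  - intros c Hc. apply gd_sign; auto. lra. apply q_mid; auto. lra.
Qed.

Lemma g_dec_hi a b u v : 0 < b -> 0 < a - b -> 0 < DD a b -> 0 <= u -> x2 a b <= u -> u <= v -> v < 1 ->
  gf a b v <= gf a b u.
Proof.
  intros Hb Hd HD Hu Hu1 Huv Hv.
  apply decr with (gd a b); auto.
  - intros c Hc; apply d_g; auto; lra.
  - intros c Hc. apply gd_sign; auto. lra. apply q_hi; auto. lra.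
Qed.

Lemma H_dec_mid a b u v : 0 < b -> 0 < a - b -> 0 < DD a b -> 0 <= u -> x1 a b <= u -> u <= v -> v <= x2 a b -> v < 1 ->
  Hf a b v <= Hf a b u.
Proof.
  intros Hb Hd HD Hu Hu1 Huv Hv1 Hv.
  apply decr with (Hder a b); auto.
  - intros c Hc; apply d_H; auto; lra.
  - intros c Hc. apply Hd_sign; auto. lra. apply q_mid; auto. lra.
Qed.

Lemma H_inc_hi a b u v : 0 < b -> 0 < a - b -> 0 < DD a b -> 0 <= u -> x2 a b <= u -> u <= v -> v < 1 ->
  Hf a b u <= Hf a b v.
Proof.
  intros Hb Hd HD Hu Hu1 Huv Hv.
  apply incr with (Hder a b); auto.
  - intros c Hc; apply d_H; auto; lra.
  - intros c Hc. apply Hd_sign; auto. lra. apply q_hi; auto. lra.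
Qed.

Lemma F_dec a b u v : 0 < b -> 0 < a - b -> 0 <= u -> u <= v -> v < 1 ->
  (forall c, u <= c <= v -> gf a b c <= 0) -> Ff a b v <= Ff a b u.
Proof.
  intros Hb Hd Hu Huv Hv Hg.
  apply decr with (Fd a b); auto.
  - intros c Hc; apply d_F; auto; lra.
  - intros c Hc. assert (Hc' : -1 < c < 1) by lra.
    pose proof (rr_pos c Hc'). pose proof (rr_sq c Hc').
    pose proof (w_pos a b c Hb Hd ltac:(lra)).
    pose proof (Hg c Hc) as Hgc. unfold gf in Hgc.
    assert (acos c * w a b c <= rr c).
    { assert (Ha : acos c <= rr c / w a b c) by lra.
      apply Rmult_le_compat_r with (r := w a b c) in Ha; [|lra].
      replace (rr c / w a b c * w a b c) with (rr c) in Ha by (field; lra). lra. }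
    assert (Hk : acos c * (w a b c / (1 - c * c)) - / rr c <= 0).
    { rewrite <- H0. replace (acos c * (w a b c / (rr c * rr c)) - / rr c)
        with ((acos c * w a b c - rr c) / (rr c * rr c)) by (field; lra).
      unfold Rdiv. assert (0 < / (rr c * rr c)) by (apply Rinv_0_lt_compat; nra). nra. }
    unfold Fd. assert (0 < Ef a b c) by (unfold Ef; apply exp_pos). nra.
Qed.

Lemma exp_minus x y : exp (x - y) = exp x / exp y.
Proof. unfold Rminus, Rdiv. rewrite exp_plus, exp_Ropp. reflexivity. Qed.

Lemma KEY a b t : -1 < t < 1 -> 0 < w a b t -> exp (Hf a b t) = Ef a b t * (rr t / w a b t).
Proof.
  intros Ht Hw.
  assert (E : Hf a b t = (b * ln (1 + t) - a * ln (1 - t)) + (/2 * ln ((1 + t) * (1 - t))) - ln (w a b t)).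
  { unfold Hf. rewrite ln_mult by lra. field. }
  rewrite E, exp_minus, exp_plus, exp_ln by auto.
  assert (exp (/ 2 * ln ((1 + t) * (1 - t))) = rr t).
  { unfold rr. rewrite <- Rpower_sqrt by nra. unfold Rpower. f_equal. f_equal. f_equal. ring. }
  rewrite H. unfold Ef. field. lra.
Qed.

Lemma g_nonneg_hi a b u : 0 < b -> 0 < a - b -> 0 < DD a b -> 0 <= u -> x2 a b <= u -> u < 1 ->
  0 <= gf a b u.
Proof.
  intros Hb Hd HD Hu Hu2 Hu1.
  destruct (Rle_or_lt 0 (gf a b u)) as [|Hneg]; auto. exfalso.
  set (e := - gf a b u).
  assert (He : 0 < e) by (unfold e; lra).
  pose proof (acos_bound_lt u ltac:(lra)) as Hac.
  set (t := Rmin (acos u) (e * (a + b) / 2)).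
  assert (Ht0 : 0 < t) by (unfold t; apply Rmin_pos; [lra | nra]).
  assert (Ht1 : t <= acos u) by (unfold t; apply Rmin_l).
  assert (Ht2 : t <= e * (a + b) / 2) by (unfold t; apply Rmin_r).
  set (z := cos t).
  assert (Hzu : u <= z).
  { destruct (Req_dec t (acos u)) as [Heq|Hne].
    - unfold z; rewrite Heq, cos_acos; lra.
    - pose proof (cos_decreasing_1 t (acos u) ltac:(lra) ltac:(lra) ltac:(lra) ltac:(lra) ltac:(lra)).
      rewrite cos_acos in H by lra. unfold z; lra. }
  assert (Hacz : acos z = t) by (unfold z; apply acos_cos; lra).
  assert (Hz1 : z < 1).
  { pose proof (COS_bound t) as [_ Hc]. fold z in Hc.
    destruct (Req_dec z 1) as [Hz|Hz]; [|lra].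
    rewrite Hz, acos_1 in Hacz. lra. }
  pose proof (g_dec_hi a b u z Hb Hd HD Hu Hu2 Hzu Hz1) as Hmono.
  assert (Hrz : rr z = sin t).
  { unfold rr. rewrite <- Hacz. rewrite sin_acos by lra. reflexivity. }
  pose proof (sin_lt_x t Ht0).
  assert (Hsz : 0 <= rr z) by (unfold rr; apply sqrt_pos).
  assert (Hwz : a + b <= w a b z) by (unfold w; nra).
  assert (rr z / w a b z <= t / (a + b)).
  { unfold Rdiv. apply Rle_trans with (rr z * / (a + b)).
    - apply Rmult_le_compat_l; auto. apply Rinv_le_contravar; lra.
    - apply Rmult_le_compat_r. left; apply Rinv_0_lt_compat; lra. lra. }
  assert (t / (a + b) <= e / 2).
  { apply Rmult_le_reg_r with (a + b). lra. unfold Rdiv. rewrite Rmult_assoc, Rinv_l by lra. nra. }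
  unfold gf in Hmono. rewrite Hacz in Hmono.
  assert (Heu : acos u - rr u / w a b u = - e) by (unfold e, gf; ring). lra.
Qed.

Lemma exp_le x y : x <= y -> exp x <= exp y.
Proof. intros H; destruct H as [H|H]; [left; apply exp_increasing; auto | rewrite H; lra]. Qed.

Lemma F_decomp a b t : 0 < b -> 0 < a - b -> 0 <= t < 1 ->
  Ff a b t = exp (Hf a b t) + Ef a b t * gf a b t.
Proof.
  intros Hb Hd Ht. rewrite KEY by (try lra; apply w_pos; lra).
  unfold Ff, gf. ring.
Qed.

Lemma E_pos a b t : 0 < Ef a b t.
Proof. unfold Ef; apply exp_pos. Qed.

Lemma main_ineq a b x : 0 < b -> 0 < a - b -> 0 < DD a b -> gf a b 0 <= 0 ->
  0 < x2 a b < 1 -> 0 < x < 1 -> exp (Hf a b (x2 a b)) <= Ff a b x.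
Proof.
  intros Hb Hd HD Hg0 [Hx2a Hx2b] [Hx0 Hx1].
  pose proof (x1_lt_x2 a b Hd HD) as H12.
  assert (Gneg : forall t, 0 <= t <= x1 a b -> gf a b t <= 0).
  { intros t Ht. pose proof (g_dec_lo a b 0 t Hb Hd HD ltac:(lra) ltac:(lra) ltac:(lra) ltac:(lra)). lra. }
  assert (Gx2 : 0 <= gf a b (x2 a b)) by (apply g_nonneg_hi; auto; lra).
  destruct (Rle_or_lt (x2 a b) x) as [Hhi|Hlo].
  - rewrite F_decomp by (auto; lra).
    pose proof (g_nonneg_hi a b x Hb Hd HD ltac:(lra) Hhi Hx1).
    pose proof (H_inc_hi a b (x2 a b) x Hb Hd HD ltac:(lra) ltac:(lra) Hhi Hx1).
    pose proof (exp_le _ _ H0). pose proof (E_pos a b x).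
    assert (0 <= Ef a b x * gf a b x) by (apply Rmult_le_pos; lra). lra.
  - destruct (Rle_or_lt (x1 a b) x) as [Hx1x|Hx1x];
    [destruct (Rle_or_lt 0 (gf a b x)) as [Hgx|Hgx]|].
    + rewrite F_decomp by (auto; lra).
      pose proof (H_dec_mid a b x (x2 a b) Hb Hd HD ltac:(lra) Hx1x ltac:(lra) ltac:(lra) Hx2b).
      pose proof (exp_le _ _ H). pose proof (E_pos a b x).
      assert (0 <= Ef a b x * gf a b x) by (apply Rmult_le_pos; lra). lra.
    +
      assert (Hex : exists xs, x <= xs <= x2 a b /\ gf a b xs = 0).
      { destruct (Req_dec (gf a b (x2 a b)) 0) as [Heq|Hne].
        - exists (x2 a b); split; auto; lra.
        - destruct (IVT_interv (gf a b) x (x2 a b)) as [z [Hz1 Hz2]]; auto; try lra.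
          + intros c Hc. apply derivable_continuous_pt.
            exists (gd a b c). apply d_g; auto; lra.
          + exists z; auto. }
      destruct Hex as [xs [Hxs Hgxs]].
      assert (HF : Ff a b xs <= Ff a b x).
      { apply F_dec; auto; try lra. intros c Hc.
        destruct (Rle_or_lt c (x1 a b)). apply Gneg; lra.
        pose proof (g_inc_mid a b c xs Hb Hd HD ltac:(lra) ltac:(lra) ltac:(lra) ltac:(lra) ltac:(lra)). lra. }
      rewrite F_decomp in HF by (auto; lra). rewrite Hgxs, Rmult_0_r, Rplus_0_r in HF.
      pose proof (H_dec_mid a b xs (x2 a b) Hb Hd HD ltac:(lra) ltac:(lra) ltac:(lra) ltac:(lra) Hx2b).
      pose proof (exp_le _ _ H). lra.
    +
      assert (Hex : exists xs, x1 a b <= xs <= x2 a b /\ gf a b xs = 0).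
      { assert (Hgl : gf a b (x1 a b) <= 0) by (apply Gneg; lra).
        destruct (Req_dec (gf a b (x1 a b)) 0) as [Heq1|Hne1].
        - exists (x1 a b); split; auto; lra.
        - destruct (Req_dec (gf a b (x2 a b)) 0) as [Heq|Hne].
          + exists (x2 a b); split; auto; lra.
          + destruct (IVT_interv (gf a b) (x1 a b) (x2 a b)) as [z [Hz1 Hz2]]; auto; try lra.
            * intros c Hc. apply derivable_continuous_pt.
              exists (gd a b c). apply d_g; auto; lra.
            * exists z; auto. }
      destruct Hex as [xs [Hxs Hgxs]].
      assert (HF : Ff a b xs <= Ff a b x).
      { apply F_dec; auto; try lra. intros c Hc.
        destruct (Rle_or_lt c (x1 a b)). apply Gneg; lra.
        pose proof (g_inc_mid a b c xs Hb Hd HD ltac:(lra) ltac:(lra) ltac:(lra) ltac:(lra) ltac:(lra)). lra. }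
      rewrite F_decomp in HF by (auto; lra). rewrite Hgxs, Rmult_0_r, Rplus_0_r in HF.
      pose proof (H_dec_mid a b xs (x2 a b) Hb Hd HD ltac:(lra) ltac:(lra) ltac:(lra) ltac:(lra) Hx2b).
      pose proof (exp_le _ _ H). lra.
Qed.

Theorem theorem2 (a b : R) :
  1 / 3 < a - b -> a - b < 4 / PI ^ 2 ->
  1 / 2 < a -> a <= 2 / PI - b ->
  16 * a * b * (b - a) + (a + b) ^ 2 > 0 ->
  0 < x2 a b < 1 ->
  forall x : R, 0 < x < 1 ->
    acos x >=
      Rpower (1 + x2 a b) (b + 1 / 2) * Rpower (1 - x2 a b) (1 / 2 - a)
        / (a + b + (a - b) * x2 a b)
      * (Rpower (1 - x) a / Rpower (1 + x) b).
Proof.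
  intros Hd1 Hd2 Ha Hab HD Hx2 x Hx.
  pose proof PI2_3_2 as HPI.
  assert (HPI2 : 9 < PI ^ 2) by nra.
  assert (Hd49 : 4 / PI ^ 2 < 4 / 9).
  { apply Rmult_lt_reg_r with (PI ^ 2 * 9). nra. field_simplify; try nra. }
  assert (Hb : 0 < b) by lra.
  assert (Hd : 0 < a - b) by lra.
  assert (HDD : 0 < DD a b) by (unfold DD; lra).
  assert (Hs : (a + b) * PI <= 2).
  { assert (a + b <= 2 / PI) by lra.
    apply Rmult_le_compat_r with (r := PI) in H; [|lra].
    replace (2 / PI * PI) with 2 in H by (field; lra). lra. }
  assert (Hg0 : gf a b 0 <= 0).
  { unfold gf, rr, w. rewrite acos_0. replace (1 - 0 * 0) with 1 by ring. rewrite sqrt_1.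
    replace (a + b + (a - b) * 0) with (a + b) by ring.
    assert (PI / 2 <= 1 / (a + b)).
    { apply Rmult_le_reg_r with (2 * (a + b)). nra. field_simplify; lra. }
    lra. }
  pose proof (main_ineq a b x Hb Hd HDD Hg0 Hx2 Hx) as Hm.
  assert (Hw2 : 0 < w a b (x2 a b)) by (apply w_pos; lra).
  assert (Erhs : Rpower (1 + x2 a b) (b + 1 / 2) * Rpower (1 - x2 a b) (1 / 2 - a)
        / (a + b + (a - b) * x2 a b)
      * (Rpower (1 - x) a / Rpower (1 + x) b) = exp (Hf a b (x2 a b)) / Ef a b x).
  { unfold Rpower, Hf, Ef. rewrite !exp_minus, exp_plus, exp_ln by auto.
    fold (w a b (x2 a b)). field. repeat split; (apply exp_neq_0 || lra). }
  rewrite Erhs. unfold Ff in Hm. pose proof (E_pos a b x).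
  apply Rle_ge. apply Rmult_le_reg_r with (Ef a b x); auto.
  unfold Rdiv. rewrite Rmult_assoc, Rinv_l by lra. lra.
Qed.
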